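(* Linear $\mathrm{HTA}_\pm$ are strictly less expressive than two-way linear $\mathrm{HTA}_\pm$: every set of $\Sigma$-trees recognised by a linear $\mathrm{HTA}_\pm$ is recognised by some two-way linear $\mathrm{HTA}_\pm$, but some set of $\Sigma$-trees recognised by a two-way linear $\mathrm{HTA}_\pm$ is not recognised by any linear $\mathrm{HTA}_\pm$.
   Context: Fix a finite set $AP$, $\Sigma=2^{AP}$; $\Sigma$-trees are unranked (finitely many children per node), unordered, leafless trees labelled by $\Sigma$. A two-way $\mathrm{HTA}_\pm$ is $\langle Q,\Sigma,\delta,q_I,F\rangle$, $Q$ finite, $q_I\in Q$, $F\subseteq Q$, $\delta:Q\times\Sigma\times\{\mathit{root},\mathit{nonroot}\}\to\mathcal{B}^+(\{\Diamond_k,\Box_k\}_{k\in\mathbb{N}}\times Q\cup\{\Uparrow\}\times Q)$ (positive Boolean formulae built with $\top,\bot,\land,\lor$; $\Diamond=\Diamond_1,\Box=\Box_1$). A run on $t$ from $s$: tree $r$ labelled in $Q\times\mathrm{Dom}(t)$ with root $(q_I,s)$, each node $x$ labelled $(q,v)$ satisfying $\delta(q,t(v),\rho)$ ($\rho=\mathit{root}$ iff $v$ is the root), where $x\models(\Diamond_k,q')$ iff $x$ has children labelled $(q',v_i)$ for $k$ pairwise distinct children $v_i$ of $v$; $x\models(\Box_k,q')$ iff for all but at most $k-1$ children $v'$ of $v$ some child of $x$ is labelled $(q',v')$; $x\models(\Uparrow,q')$ iff some child of $x$ is labelled $(q',v')$ with $v'$ the parent of $v$. Accepting: every infinite path of $r$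 from its root visits $F$ infinitely often. Recognised language: trees with an accepting run from the root. Hesitant: $Q$ partitioned into totally ordered nonempty components such that transitions from $Q_i$ mention only states in components $Q_j$, $j\le i$, each component being transient (no $Q_i$-atoms in transitions of its states), existential ($Q_i$-atoms only of form $(\Diamond,q')$, at most one per DNF clause), universal (only $(\Box,q')$, at most one per CNF clause), or upward (a singleton $\{q\}$ where $q$ occurs in its own transitions only as $(\Uparrow,q)$). Polarised: existential-component states not in $F$, universal-component states in $F$. Linear: all components are singletons. A (one-way) linear $\mathrm{HTA}_\pm$ is the special case with no atoms $(\Uparrow,q)$ and with $\delta$ not depending on the $\mathit{root}/\mathit{nonroot}$ argument (equivalently $\delta:Q\times\Sigma\to\mathcal{B}^+(\{\Diamond_k,\Box_k\}_{k\in\mathbb{N}}\times Q)$), with components of types transient, existential or universal only. *)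

(* Defs.v *)
From mathcomp Require Import all_boot.
From Stdlib Require List.
Set Implicit Arguments. Unset Strict Implicit. Unset Printing Implicit Defensive.

(* A tree over labels S: nodes are sequences of child indices from the root;
   node w has children  rcons w i  for i < arity w. *)
Record tree (S : Type) := Tree { arity : seq nat -> nat; label : seq nat -> S }.

Fixpoint indom_from S (t : tree S) (pre w : seq nat) : bool :=
  match w with
  | [::] => true
  | i :: w' => (i < arity t pre) && indom_from t (rcons pre i) w'
  end.

Definition indom S (t : tree S) (w : seq nat) : bool := indom_from t [::] w.

(* Leafless (finite branching is built in). *)
Definition sigma_tree S (t : tree S) : Prop :=
  forall w, indom t w -> 0 < arity t w.

Definition parent (w : seq nat) : seq nat := take (size w).-1 w.

Inductive atom (Q : Type) :=
| ADia of nat & Q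
| ABox of nat & Q
| AUp of Q.

Definition atom_state Q (a : atom Q) : Q :=
  match a with ADia _ q => q | ABox _ q => q | AUp q => q end.

Inductive pbf (A : Type) :=
| PTrue | PFalse | PAtom of A | PAnd of pbf A & pbf A | POr of pbf A & pbf A.
Arguments PTrue {A}. Arguments PFalse {A}.

Fixpoint atoms A (f : pbf A) : seq A :=
  match f with
  | PTrue | PFalse => [::]
  | PAtom a => [:: a]
  | PAnd g h | POr g h => atoms g ++ atoms h
  end.

Fixpoint psat A (P : A -> Prop) (f : pbf A) : Prop :=
  match f with
  | PTrue => True
  | PFalse => False
  | PAtom a => P a
  | PAnd g h => psat P g /\ psat P h
  | POr g h => psat P g \/ psat P h
  end.

Fixpoint dnf A (f : pbf A) : seq (seq A) :=
  match f with
  | PTrue => [:: [::]]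
  | PFalse => [::]
  | PAtom a => [:: [:: a]]
  | POr g h => dnf g ++ dnf h
  | PAnd g h => [seq c1 ++ c2 | c1 <- dnf g, c2 <- dnf h]
  end.

Fixpoint cnf A (f : pbf A) : seq (seq A) :=
  match f with
  | PTrue => [::]
  | PFalse => [:: [::]]
  | PAtom a => [:: [:: a]]
  | PAnd g h => cnf g ++ cnf h
  | POr g h => [seq c1 ++ c2 | c1 <- cnf g, c2 <- cnf h]
  end.

(* the boolean argument of hdelta is true iff the node is the root *)
Record hta (S : Type) := HTA {
  hQ : finType;
  hdelta : hQ -> S -> bool -> pbf (atom hQ);
  hqI : hQ;
  hF : {set hQ}
}.

(* run trees: nodes are sequences of naturals (arbitrary, possibly infinite,
   branching), domain rdom (prefix closed), labels in Q x Dom(t) *)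
Record run (Q : Type) := Run { rdom : seq nat -> Prop; rlab : seq nat -> Q * seq nat }.

Section Runs.
Variables (S : Type) (A : hta S) (t : tree S).

Definition has_child (r : run (hQ A)) (x : seq nat) (q : hQ A) (v : seq nat) :=
  exists j, rdom r (rcons x j) /\ rlab r (rcons x j) = (q, v).

Definition atom_sat (r : run (hQ A)) (x v : seq nat) (a : atom (hQ A)) : Prop :=
  match a with
  | ADia k q => exists s : seq nat,
      [/\ uniq s, size s = k &
          forall i, i \in s -> i < arity t v /\ has_child r x q (rcons v i)]
  | ABox k q => exists E : seq nat,
      size E < k /\
      forall i, i < arity t v -> i \notin E -> has_child r x q (rcons v i)
  | AUp q => v <> [::] /\ has_child r x q (parent v)
  end.

Definition is_run_from (s : seq nat) (r : run (hQ A)) : Prop :=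
  [/\ rdom r [::],
      (forall x i, rdom r (rcons x i) -> rdom r x),
      rlab r [::] = (hqI A, s) &
      forall x, rdom r x ->
        let: (q, v) := rlab r x in
        indom t v /\ psat (atom_sat r x v) (@hdelta _ A q (label t v) (v == [::]))].

Definition accepting (r : run (hQ A)) : Prop :=
  forall p : nat -> seq nat, p 0 = [::] ->
    (forall n, rdom r (p n.+1) /\ exists j, p n.+1 = rcons (p n) j) ->
    forall m, exists2 n, m <= n & (rlab r (p n)).1 \in hF A.

Definition accepts : Prop :=
  exists r, is_run_from [::] r /\ accepting r.

End Runs.

Definition recognises S (A : hta S) (L : tree S -> Prop) : Prop :=
  forall t, sigma_tree t -> (L t <-> accepts A t).

Inductive ctype := Transient | Existential | Universal | Upward.

(* Components are singletons {q}, totally ordered by an injective rank. *)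
Definition linear_struct S (A : hta S) (allow_up : bool) : Prop :=
  exists (rk : hQ A -> nat) (ty : hQ A -> ctype),
  [/\ injective rk,
      (forall q a b x, List.In x (atoms (@hdelta _ A q a b)) ->
          rk (atom_state x) <= rk q) &
      forall q, match ty q with
      | Transient => forall a b x, List.In x (atoms (@hdelta _ A q a b)) ->
                       atom_state x <> q
      | Existential =>
          q \notin hF A /\
          forall a b,
            (forall x, List.In x (atoms (@hdelta _ A q a b)) ->
               atom_state x = q -> x = ADia 1 q) /\
            (forall c, List.In c (dnf (@hdelta _ A q a b)) ->
               forall x y, List.In x c -> List.In y c ->
                 atom_state x = q -> atom_state y = q -> x = y)
      | Universal =>
          q \in hF A /\
          forall a b,
            (forall x, List.In x (atoms (@hdelta _ A q a b)) ->
               atom_state x = q -> x = ABox 1 q) /\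
            (forall c, List.In c (cnf (@hdelta _ A q a b)) ->
               forall x y, List.In x c -> List.In y c ->
                 atom_state x = q -> atom_state y = q -> x = y)
      | Upward =>
          allow_up /\
          forall a b x, List.In x (atoms (@hdelta _ A q a b)) ->
            atom_state x = q -> x = AUp q
      end].

Definition twoway_linear S (A : hta S) : Prop := linear_struct A true.

Definition oneway_linear S (A : hta S) : Prop :=
  [/\ linear_struct A false,
      (forall q a b q', ~ List.In (AUp q') (atoms (@hdelta _ A q a b))) &
      (forall q a, @hdelta _ A q a true = @hdelta _ A q a false)].

(* Main.v *)
Require Import Defs.
From mathcomp Require Import all_boot zify.
From Stdlib Require Import ClassicalEpsilon.
Set Implicit Arguments. Unset Strict Implicit. Unset Printing Implicit Defensive.

Lemma In_cat X (a : X) s1 s2 : List.In a (s1 ++ s2) -> List.In a s1 \/ List.In a s2.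
Proof. elim: s1 => [|b s IH] /=; first by right. case=> [->|H]; first by left; left.
case: (IH H) => H'; [left; right | right] => //. Qed.

Lemma In_catl X (a : X) s1 s2 : List.In a s1 -> List.In a (s1 ++ s2).
Proof. elim: s1 => [|b s IH] //= H; case: H => [->|H]; [by left | right; exact: IH]. Qed.

Lemma In_catr X (a : X) s1 s2 : List.In a s2 -> List.In a (s1 ++ s2).
Proof. elim: s1 => [|b s IH] //= H; right; exact: IH. Qed.

Lemma psat_mono_in X (P P' : X -> Prop) f :
  (forall a, List.In a (atoms f) -> P a -> P' a) -> psat P f -> psat P' f.
Proof.
elim: f => //= [a|g IHg h IHh|g IHg h IHh] H.
- by apply: H; left.
- case=> Hg Hh; split; [apply: IHg | apply: IHh] => // a Ha; apply: H;
  [exact: In_catl | exact: In_catr].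
- case=> [Hg|Hh]; [left; apply: IHg | right; apply: IHh] => // a Ha; apply: H;
  [exact: In_catl | exact: In_catr].
Qed.

Section Gen.
Variable S : Type.
Variable A : hta S.
Variable t : tree S.

Definition withInit (q : hQ A) : hta S := HTA (@hdelta _ A) q (hF A).

Definition Acc (q : hQ A) (v : seq nat) : Prop :=
  exists r : run (hQ A), @is_run_from _ (withInit q) t v r /\ @accepting _ (withInit q) r.

Definition semP (P : hQ A -> seq nat -> Prop) (v : seq nat) (a : atom (hQ A)) : Prop :=
  match a with
  | ADia k q => exists s : seq nat,
      [/\ uniq s, size s = k & forall i, i \in s -> i < arity t v /\ P q (rcons v i)]
  | ABox k q => exists E : seq nat,
      size E < k /\ forall i, i < arity t v -> i \notin E -> P q (rcons v i)
  | AUp q => v <> [::] /\ P q (parent v)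
  end.

Lemma subrun q (r : run (hQ A)) v j q2 w :
  @is_run_from _ (withInit q) t v r -> @accepting _ (withInit q) r ->
  rdom r [:: j] -> rlab r [:: j] = (q2, w) -> Acc q2 w.
Proof.
move=> [Hr0 Hcl Hlab Hnode] Hacc Hj Hl.
exists (Run (fun x => rdom r (j :: x)) (fun x => rlab r (j :: x))).
split.
- split => //=.
  + move=> x i H; exact: (Hcl (j :: x) i H).
  + move=> x Hx; exact: (Hnode (j :: x) Hx).
- move=> p Hp0 Hp m.
  pose p' n := if n is n'.+1 then j :: p n' else [::].
  have Hp' : forall n, rdom r (p' n.+1) /\ exists j', p' n.+1 = rcons (p' n) j'.
    case=> [|n] /=; first by split; [|exists j]; rewrite Hp0.
    have [H1 [j' E]] := Hp n; split; first exact: H1.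
    by exists j'; rewrite E.
  have [n Hn Hf] := Hacc p' erefl Hp' m.+1.
  case: n Hn Hf => [|n] //= Hn Hf; exists n => //.
Qed.

Lemma acc_unfold q v : Acc q v ->
  indom t v /\ psat (semP Acc v) (@hdelta _ A q (label t v) (v == [::])).
Proof.
move=> [r [Hrun Hacc]]; have [Hr0 Hcl Hlab Hnode] := Hrun.
have := Hnode [::] Hr0; rewrite Hlab => -[Hi Hp]; split => //.
have Hc : forall q2 w, has_child r [::] q2 w -> Acc q2 w.
  move=> q2 w [j [Hj Hl]]; exact: (subrun Hrun Hacc Hj Hl).
apply: psat_mono_in Hp => -[k q2|k q2|q2] _ /=.
- case=> s [H1 H2 H3]; exists s; split => // i /H3 [? ?]; split => //; exact: Hc.
- case=> E [H1 H2]; exists E; split => // i H3 H4; exact: Hc (H2 _ H3 H4).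
- case=> H1 H2; split => //; exact: Hc.
Qed.

Definition dec (j : nat) : option (hQ A * seq nat) := unpickle j.
Definition enc (p : hQ A * seq nat) : nat := pickle p.
Lemma decK p : dec (enc p) = Some p.
Proof. by rewrite /dec /enc pickleK. Qed.

Definition pickR (q : hQ A) (w : seq nat) : run (hQ A) :=
  match excluded_middle_informative (Acc q w) with
  | left H => proj1_sig (constructive_indefinite_description _ H)
  | right _ => Run (fun _ => False) (fun _ => (q, w))
  end.

Lemma pickR_spec q w : Acc q w ->
  @is_run_from _ (withInit q) t w (pickR q w) /\ @accepting _ (withInit q) (pickR q w).
Proof.
rewrite /pickR; case: excluded_middle_informative => // H _.
by case: constructive_indefinite_description.
Qed.

Definition glue q v : run (hQ A) :=
  Run (fun x => match x with
                | [::] => True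
                | j :: x' => match dec j with
                             | Some (q2, w) => Acc q2 w /\ rdom (pickR q2 w) x'
                             | None => False end end)
      (fun x => match x with
                | [::] => (q, v)
                | j :: x' => match dec j with
                             | Some (q2, w) => rlab (pickR q2 w) x'
                             | None => (q, v) end end).

Lemma acc_fold q v : indom t v ->
  psat (semP Acc v) (@hdelta _ A q (label t v) (v == [::])) -> Acc q v.
Proof.
move=> Hi Hp; exists (glue q v); split.
- split => //.
  + move=> [|j x] i /=; first by [].
    by case: (dec j) => // -[q2 w] [Ha Hd]; split => //;
       have [[_ Hcl _ _] _] := pickR_spec Ha; exact: Hcl Hd.
  + move=> [|j x] /=.
    * move=> _; split => //; apply: psat_mono_in Hp => a _.
      have Hc : forall q2 w, Acc q2 w -> has_child (glue q v) [::] q2 w.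
        move=> q2 w Ha; exists (enc (q2, w)) => /=; rewrite decK.
        have [[H0 _ Hl _] _] := pickR_spec Ha; by split.
      case: a => [k q2|k q2|q2] /=.
      -- case=> s [H1 H2 H3]; exists s; split => // i /H3 [? ?]; split => //; exact: Hc.
      -- case=> E [H1 H2]; exists E; split => // i H3 H4; exact: Hc (H2 _ H3 H4).
      -- case=> H1 H2; split => //; exact: Hc.
    * case E: (dec j) => [[q2 w]|] // [Ha Hd].
      have [[_ _ _ Hn] _] := pickR_spec Ha.
      have := Hn x Hd; case: (rlab (pickR q2 w) x) => q3 w3 [Hi3 Hp3]; split => //.
      apply: psat_mono_in Hp3 => a _.
      have Hc : forall q4 w4, has_child (pickR q2 w) x q4 w4 -> has_child (glue q v) (j :: x) q4 w4.
        by move=> q4 w4 [j' [H1 H2]]; exists j' => /=; rewrite E.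
      case: a => [k q4|k q4|q4] /=.
      -- case=> s [H1 H2 H3]; exists s; split => // i /H3 [? ?]; split => //; exact: Hc.
      -- case=> E' [H1 H2]; exists E'; split => // i H3 H4; exact: Hc (H2 _ H3 H4).
      -- case=> H1 H2; split => //; exact: Hc.
- move=> p Hp0 Hps m.
  have [H1 [j Ej]] := Hps 0; rewrite Hp0 /= in Ej.
  have Hhead : forall n, p n.+1 = j :: behead (p n.+1).
    elim=> [|n IH]; first by rewrite Ej.
    by have [_ [j' ->]] := Hps n.+1; rewrite IH.
  move: H1; rewrite Ej /=; case E: (dec j) => [[q2 w]|] // [Ha Hd].
  have [_ Hacc] := pickR_spec Ha.
  pose p' n := behead (p n.+1).
  have Hp'0 : p' 0 = [::] by rewrite /p' Ej.
  have Hp' : forall n, rdom (pickR q2 w) (p' n.+1) /\ exists j', p' n.+1 = rcons (p' n) j'.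
    move=> n; have [H2 [j' E2]] := Hps n.+1.
    move: H2; rewrite Hhead /= E => -[_ H2]; split => //.
    exists j'; rewrite /p' E2 (Hhead n) /=.
    by [].
  have [n Hn Hf] := Hacc p' Hp'0 Hp' m.
  exists n.+1; first by apply: leqW.
  by rewrite Hhead /= E.
Qed.

Definition satrun (P : hQ A -> seq nat -> Prop) q v : run (hQ A) :=
  Run (fun x => forall j, j \in x -> exists q2 w, dec j = Some (q2, w) /\ P q2 w)
      (fun x => if x is [::] then (q, v) else odflt (q, v) (dec (last 0 x))).

Lemma sat_acc (P : hQ A -> seq nat -> Prop) q v :
  (forall q2 w, P q2 w -> indom t w /\ psat (semP P w) (@hdelta _ A q2 (label t w) (w == [::]))) ->
  (forall q2 w, P q2 w -> q2 \in hF A) -> P q v -> Acc q v.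
Proof.
move=> HP HF Hqv; exists (satrun P q v).
have Hlab : forall x, rdom (satrun P q v) x -> P (rlab (satrun P q v) x).1 (rlab (satrun P q v) x).2.
  case/lastP => [|x j] //= Hx.
  have [q2 [w [E HPw]]] := Hx j ltac:(by rewrite mem_rcons mem_head).
  by case: x Hx => [|a x] _ /=; rewrite ?last_rcons E.
have Hc : forall x q2 w, rdom (satrun P q v) x -> P q2 w -> has_child (satrun P q v) x q2 w.
  move=> x q2 w Hx Hw; exists (enc (q2, w)); split.
  - move=> j; rewrite mem_rcons inE => /orP [/eqP ->|/Hx //].
    by exists q2, w; rewrite decK.
  - by case: x Hx => [|a x] _ /=; rewrite ?last_rcons decK.
split; [split|].
- by [].
- by move=> x i /= Hx j Hj; apply: Hx; rewrite mem_rcons inE Hj orbT.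
- by [].
- move=> x Hx; have := Hlab x Hx; case: (rlab (satrun P q v) x) => q2 w /= Hw.
  have [Hi Hp] := HP q2 w Hw; split => //.
  apply: psat_mono_in Hp => -[k q3|k q3|q3] _ /=.
  + case=> s [H1 H2 H3]; exists s; split => // i /H3 [? ?]; split => //; exact: Hc.
  + case=> E [H1 H2]; exists E; split => // i H3 H4; exact: Hc (H2 _ H3 H4).
  + case=> H1 H2; split => //; exact: Hc.
- move=> p Hp0 Hps m; exists m => //.
  case: m => [|m]; first by rewrite Hp0 /=; exact: HF Hqv.
  have [H1 _] := Hps m; exact: HF (Hlab _ H1).
Qed.


End Gen.

Lemma take_rcons_le T k (x : seq T) j : k <= size x -> take k (rcons x j) = take k x.
Proof.
move=> H; rewrite -cats1 take_cat; case: ltnP => // H2.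
have Ek : k = size x by apply/eqP; rewrite eqn_leq H H2.
by rewrite Ek subnn take0 cats0 take_size.
Qed.

Lemma indom_from_cat S (t : tree S) pre w1 w2 :
  indom_from t pre (w1 ++ w2) = indom_from t pre w1 && indom_from t (pre ++ w1) w2.
Proof.
elim: w1 pre => [|i w1 IH] pre /=; first by rewrite cats0.
by rewrite IH andbA -cat_rcons.
Qed.

Lemma indom_cat S (t : tree S) v u : indom t (v ++ u) = indom t v && indom_from t v u.
Proof. by rewrite /indom indom_from_cat. Qed.

Section Sub.
Variable S : Type.
Variable A : hta S.
Hypothesis noup : forall q a b q', ~ List.In (AUp q') (atoms (@hdelta _ A q a b)).
Hypothesis flag : forall q a, @hdelta _ A q a true = @hdelta _ A q a false.
Variables (t t' : tree S) (v v' : seq nat).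
Hypothesis Hv : indom t v.
Hypothesis Hv' : indom t' v'.
Hypothesis Heq : forall u, arity t (v ++ u) = arity t' (v' ++ u) /\ label t (v ++ u) = label t' (v' ++ u).

Lemma indom_sub u : indom t (v ++ u) = indom t' (v' ++ u).
Proof.
rewrite !indom_cat Hv Hv' /=.
suff H : forall x, indom_from t (v ++ x) u = indom_from t' (v' ++ x) u by have := H [::]; rewrite !cats0.
elim: u => [|i u IH] x //=.
by rewrite (proj1 (Heq x)) !rcons_cat IH.
Qed.

Lemma acc_sub (q : hQ A) : Acc t q v -> Acc t' q v'.
Proof.
move=> [r [Hrun Hacc]]; have [Hr0 Hcl Hlab Hnode] := Hrun.
pose ext x := forall k, exists u, (rlab r (take k x)).2 = v ++ u.
exists (Run (fun x => rdom r x /\ ext x)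
            (fun x => ((rlab r x).1, v' ++ drop (size v) (rlab r x).2))).
have Hfl : forall q a b, @hdelta _ A q a b = @hdelta _ A q a false by move=> ? ? [].
split; [split|].
- split => // k; exists [::]; by rewrite Hlab cats0.
- move=> x i /= [Hx He]; split; first exact: Hcl Hx.
  move=> k; have [u Hu] := He (minn k (size x)).
  exists u; move: Hu; rewrite take_rcons_le ?geq_minr //.
  case: (leqP k (size x)) => Hk //.
  by rewrite take_size take_oversize // ltnW.
- by rewrite /= Hlab /= drop_size cats0.
- move=> x /= [Hx He].
  have [u Hu] := He (size x); rewrite take_size in Hu.
  have := Hnode x Hx; case E: (rlab r x) => [q1 w] /=; rewrite E /= in Hu; subst w.
  move=> [Hi Hp]; rewrite drop_size_cat //.
  split; first by rewrite -indom_sub.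
  rewrite Hfl; rewrite Hfl (proj2 (Heq u)) in Hp.
  have Hc : forall q2 i, has_child r x q2 (rcons (v ++ u) i) ->
      has_child (Run (fun x => rdom r x /\ ext x)
            (fun x => ((rlab r x).1, v' ++ drop (size v) (rlab r x).2))) x q2 (rcons (v' ++ u) i).
    move=> q2 i [j [Hj Hl]]; exists j => /=; split.
    + split => // k; case: (leqP k (size x)) => Hk; first by rewrite take_rcons_le.
      rewrite take_oversize ?size_rcons // Hl /=; exists (rcons u i); by rewrite rcons_cat.
    + by rewrite Hl /= !rcons_cat drop_size_cat.
  apply: psat_mono_in Hp => -[k q2|k q2|q2] Hin /=.
  + case=> s [H1 H2 H3]; exists s; split => // i /H3 [H4 H5]; split; last exact: Hc.
    by rewrite -(proj1 (Heq u)).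
  + case=> E' [H1 H2]; exists E'; split => // i H3 H4; apply: Hc; apply: H2 => //.
    by rewrite (proj1 (Heq u)).
  + by case: (noup Hin).
- move=> p Hp0 Hps m.
  have Hps' : forall n, rdom r (p n.+1) /\ exists j, p n.+1 = rcons (p n) j.
    by move=> n; have [[H1 _] H2] := Hps n.
  exact: Hacc p Hp0 Hps' m.
Qed.
End Sub.

Definition pb (P : Prop) : bool := if excluded_middle_informative P then true else false.
Lemma pbP P : reflect P (pb P).
Proof. rewrite /pb; case: excluded_middle_informative => H; by constructor. Qed.
Lemma pb_eq P Q : (P <-> Q) -> pb P = pb Q.
Proof. move=> H; apply/idP/idP => /pbP HH; apply/pbP; by apply H. Qed.

Lemma psat_iff X (P P' : X -> Prop) f :
  (forall a, List.In a (atoms f) -> (P a <-> P' a)) -> (psat P f <-> psat P' f).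
Proof. move=> H; split; apply: psat_mono_in => a Ha; by case: (H a Ha). Qed.

Lemma dia2 (P : nat -> Prop) k :
  (exists s : seq nat, [/\ uniq s, size s = k & forall i, i \in s -> i < 2 /\ P i])
  <-> k <= pb (P 0) + pb (P 1).
Proof.
pose L := [seq i <- [:: 0; 1] | pb (P i)].
have HL : size L = pb (P 0) + pb (P 1) by rewrite size_filter /= addn0.
have HmL : forall i, (i \in L) = (i < 2) && pb (P i).
  move=> i; rewrite mem_filter andbC; congr andb; by case: i => [|[|i]].
split.
- case=> s [Hu Hs Hm]; rewrite -HL -Hs; apply: uniq_leq_size => // i /Hm [H1 H2].
  by rewrite HmL H1; apply/pbP.
- move=> Hk; exists (take k L); split.
  + by apply: take_uniq; rewrite filter_uniq.
  + by rewrite size_take HL; case: ltngtP Hk => //; lia.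
  + move=> i /mem_take; rewrite HmL => /andP [H1 /pbP H2]; by split.
Qed.

Lemma box2 (P : nat -> Prop) k :
  (exists E : seq nat, size E < k /\ forall i, i < 2 -> i \notin E -> P i)
  <-> 2 - (pb (P 0) + pb (P 1)) < k.
Proof.
pose C := [seq i <- [:: 0; 1] | ~~ pb (P i)].
have HC : size C = 2 - (pb (P 0) + pb (P 1)).
  by rewrite size_filter /=; case: (pb (P 0)); case: (pb (P 1)).
have HmC : forall i, (i \in C) = (i < 2) && ~~ pb (P i).
  move=> i; rewrite mem_filter andbC; congr andb; by case: i => [|[|i]].
split.
- case=> E [Hs Hm]; rewrite -HC; apply: leq_ltn_trans Hs.
  apply: uniq_leq_size; first by rewrite filter_uniq.
  move=> i; rewrite HmC => /andP [H1 H2]; apply/negPn/negP => H3.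
  by move/negP: H2; apply; apply/pbP; apply: Hm.
- move=> Hk; exists C; split; first by rewrite HC.
  move=> i H1; rewrite HmC H1 /= negbK; by move/pbP.
Qed.

Lemma iter_stab (x : nat -> nat) (K : nat -> nat) :
  (forall i, x i.+1 = K (x i)) -> (forall a b, a <= b -> K a <= K b) ->
  (forall i, x i <= 2) -> forall i, x (i + 2) = x 2.
Proof.
move=> Hx HK Hb.
have H3 : x 3 = x 2.
  have e1 := Hx 0; have e2 := Hx 1; have e3 := Hx 2.
  have m01 : x 0 <= x 1 -> x 1 <= x 2 by move=> h; rewrite e1 e2; apply: HK.
  have m10 : x 1 <= x 0 -> x 2 <= x 1 by move=> h; rewrite e1 e2; apply: HK.
  have m12 : x 1 <= x 2 -> x 2 <= x 3 by move=> h; rewrite e2 e3; apply: HK.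
  have m21 : x 2 <= x 1 -> x 3 <= x 2 by move=> h; rewrite e2 e3; apply: HK.
  have q01 : x 0 = x 1 -> x 1 = x 2 by move=> h; rewrite e2 -h -e1.
  have q12 : x 1 = x 2 -> x 2 = x 3 by move=> h; rewrite e3 -h -e2.
  have b0 := Hb 0; have b1 := Hb 1; have b2 := Hb 2; have b3 := Hb 3.
  lia.
elim=> [|i IH] //; by rewrite addSn Hx IH -Hx H3.
Qed.

Section Trees.
Variable AP : finType.
Variable a0 : AP.

Definition mk (b : bool) : {set AP} := if b then [set a0] else set0.
Arguments mk : simpl never.

Definition T (n : nat) : tree {set AP} :=
  Tree (fun w => if (size w == n) && (last 1 w != 0) then 3 else 2)
       (fun w => mk (last 1 w == 0)).

Lemma T_sigma n : sigma_tree (T n).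
Proof. move=> w _ /=; by case: ifP. Qed.

Section OneWay.
Variable A : hta {set AP}.
Hypothesis noup : forall q a b q', ~ List.In (AUp q') (atoms (@hdelta _ A q a b)).
Hypothesis flag : forall q a, @hdelta _ A q a true = @hdelta _ A q a false.
Variable rk : hQ A -> nat.
Hypothesis rk_inj : injective rk.
Hypothesis rk_mono : forall q a b x, List.In x (atoms (@hdelta _ A q a b)) ->
          rk (atom_state x) <= rk q.

Definition V (q : hQ A) (l j : nat) : Prop := Acc (T j.+1) q [:: l].
Definition cnt (q : hQ A) j : nat := pb (V q 0 j) + pb (V q 1 j).

Definition semV j (a : atom (hQ A)) : Prop :=
  match a with
  | ADia k q' => k <= cnt q' j
  | ABox k q' => 2 - cnt q' j < k
  | AUp _ => False
  end.

Lemma V_child q l i j : l < 2 -> i < 2 ->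
  (Acc (T j.+2) q [:: l; i] <-> V q i j).
Proof.
move=> Hl Hi; rewrite /V.
have Heq : forall u, arity (T j.+2) ([:: l; i] ++ u) = arity (T j.+1) ([:: i] ++ u) /\
                     label (T j.+2) ([:: l; i] ++ u) = label (T j.+1) ([:: i] ++ u).
  by move=> u.
have Hd1 : indom (T j.+2) [:: l; i] by rewrite /indom /= Hl Hi.
have Hd2 : indom (T j.+1) [:: i] by rewrite /indom /= Hi.
split; apply: acc_sub => //.
Qed.

Lemma V_step q l j : l < 2 ->
  (V q l j.+1 <-> psat (semV j) (@hdelta _ A q (mk (l == 0)) false)).
Proof.
move=> Hl.
have Hd : indom (T j.+2) [:: l] by rewrite /indom /= Hl.
have Hsem : psat (semP (T j.+2) (Acc (T j.+2)) [:: l]) (@hdelta _ A q (mk (l == 0)) false) <->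
            psat (semV j) (@hdelta _ A q (mk (l == 0)) false).
  apply: psat_iff => -[k q'|k q'|q'] Hin /=; last by split => //; case: (noup Hin).
  + apply: (iff_trans _ (dia2 (fun i => V q' i j) k)); split; case=> s [H1 H2 H3]; exists s; split => // i /H3 [H4 H5];
      split => //; by [rewrite -(V_child _ _ Hl H4) | rewrite (V_child _ _ Hl H4)].
  + apply: (iff_trans _ (box2 (fun i => V q' i j) k)); split; case=> E [H1 H2]; exists E; split => // i H3 H4;
      have := H2 i H3 H4; by [rewrite (V_child _ _ Hl H3) | rewrite -(V_child _ _ Hl H3)].
split.
- by move/acc_unfold => [_ H]; apply/Hsem.
- by move=> H; apply: acc_fold => //; apply/Hsem.
Qed.

Definition StabFrom q J := forall j, J <= j -> forall l, l < 2 -> (V q l j <-> V q l J).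

Lemma StabFrom_mono q J J' : J <= J' -> StabFrom q J -> StabFrom q J'.
Proof.
move=> HJ H j Hj l Hl; rewrite (H j _ l Hl) ?(H J' _ l Hl) //; exact: leq_trans Hj.
Qed.

Lemma uniformJ (P : hQ A -> Prop) :
  (forall q, P q -> exists J, StabFrom q J) -> exists J, forall q, P q -> StabFrom q J.
Proof.
move=> H.
suff: forall s : seq (hQ A), exists J, forall q, q \in s -> P q -> StabFrom q J.
  by case/(_ (enum (hQ A))) => J HJ; exists J => q; apply: HJ; rewrite mem_enum.
elim=> [|q s [J1 HJ1]]; first by exists 0.
case: (excluded_middle_informative (P q)) => Hq.
- have [J2 HJ2] := H q Hq; exists (maxn J1 J2) => q'; rewrite inE => /orP [/eqP ->|Hs] Hp.
  + by apply: StabFrom_mono (HJ2); rewrite leq_maxr.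
  + by apply: StabFrom_mono (HJ1 _ Hs Hp); rewrite leq_maxl.
- exists J1 => q'; rewrite inE => /orP [/eqP ->|Hs] Hp //; exact: HJ1.
Qed.

Lemma stab_all : forall q, exists J, StabFrom q J.
Proof.
suff: forall m q, rk q < m -> exists J, StabFrom q J by move=> H q; exact: (H (rk q).+1).
elim=> [|m IH] q // Hq.
have [J0 HJ0] := @uniformJ (fun q' => rk q' < rk q) (fun q' Hq' => IH q' (leq_trans Hq' Hq)).
pose H l c := psat (fun a => match a with
                 | ADia k q' => if q' == q then k <= c else k <= cnt q' J0
                 | ABox k q' => if q' == q then 2 - c < k else 2 - cnt q' J0 < k
                 | AUp _ => False end) (@hdelta _ A q (mk (l == 0)) false).
have Hcnt : forall q' j, rk q' < rk q -> J0 <= j -> cnt q' j = cnt q' J0.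
  move=> q' j Hr Hj.
  by rewrite /cnt (pb_eq (HJ0 q' Hr j Hj 0 erefl)) (pb_eq (HJ0 q' Hr j Hj 1 erefl)).
have C1 : forall j l, J0 <= j -> l < 2 -> (V q l j.+1 <-> H l (cnt q j)).
  move=> j l Hj Hl; rewrite V_step //; apply: psat_iff => a Hin.
  have Hr := rk_mono Hin.
  case: a Hin Hr => [k q'|k q'|q'] Hin Hr /=; last by split => //; case: (noup Hin).
  + case: eqP => [-> //|Hne]; rewrite Hcnt //.
    rewrite ltn_neqAle Hr andbT; apply/negP => /eqP /rk_inj; exact: Hne.
  + case: eqP => [-> //|Hne]; rewrite Hcnt //.
    rewrite ltn_neqAle Hr andbT; apply/negP => /eqP /rk_inj; exact: Hne.
have Hmono : forall l c c', c <= c' -> H l c -> H l c'.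
  move=> l c c' Hc; apply: psat_mono_in => -[k q'|k q'|q'] _ //=; case: eqP => // _; lia.
pose K c := pb (H 0 c) + pb (H 1 c).
have HK : forall a b, a <= b -> K a <= K b.
  move=> a b Hab; rewrite /K leq_add //;
  case: (pbP (H _ a)) => Ha; case: (pbP (H _ b)) => Hb //; case: Hb; exact: Hmono Ha.
pose x i := cnt q (J0 + i).
have Hx : forall i, x i.+1 = K (x i).
  move=> i; have Hj : J0 <= J0 + i by exact: leq_addr.
  by rewrite /x /K addnS /cnt (pb_eq (C1 _ 0 Hj erefl)) (pb_eq (C1 _ 1 Hj erefl)).
have Hb : forall i, x i <= 2.
  move=> i; rewrite /x /cnt; case: (pb _); case: (pb _) => //.
have Hst := iter_stab Hx HK Hb.
exists (J0 + 3) => j Hj l Hl.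
have Ej : j = j.-1.+1 by lia.
have E3 : J0 + 3 = (J0 + 2).+1 by lia.
rewrite Ej E3 !C1 //; try lia.
have -> : cnt q j.-1 = x (j.-1 - J0 - 2 + 2) by rewrite /x; congr cnt; lia.
by rewrite Hst.
Qed.

Lemma acc_root n : accepts A (T n) <-> V (hqI A) 1 n.
Proof.
have Hd1 : indom (T n) [::] by [].
have Hd2 : indom (T n.+1) [:: 1] by [].
rewrite /V; split.
- case=> r [H1 H2].
  have HA : Acc (T n) (hqI A) [::] by exists r; split; [exact: H1 | exact: H2].
  by apply: (acc_sub noup flag) HA => //.
- move=> HA.
  have : Acc (T n) (hqI A) [::] by apply: (acc_sub noup flag) HA => //.
  by case=> r [H1 H2]; exists r; split; [exact: H1 | exact: H2].
Qed.

End OneWay.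

Lemma mk_in b : (a0 \in mk b) = b.
Proof. by case: b; rewrite /mk ?in_set1 ?eqxx ?in_set0. Qed.

Definition QB : finType := Finite.clone 'I_4 _.
Definition sM : QB := @Ordinal 4 0 isT.
Definition sU : QB := @Ordinal 4 1 isT.
Definition fB : QB := @Ordinal 4 2 isT.
Definition uB : QB := @Ordinal 4 3 isT.

Definition coreB : pbf (atom QB) := PAnd (PAtom (ABox 3 fB)) (PAtom (ABox 1 uB)).

Definition dB (q : QB) (a : {set AP}) (b : bool) : pbf (atom QB) :=
  match val q with
  | 0 => if a0 \in a then PTrue else PFalse
  | 1 => if a0 \in a then PFalse else PTrue
  | 2 => PFalse
  | _ => if b then coreB else POr (PAtom (AUp (if a0 \in a then sM else sU))) coreB
  end.

Definition B : hta {set AP} := @HTA _ QB dB uB setT.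

Fixpoint alt k : seq nat := if k is k'.+1 then rcons (alt k') (odd k') else [::].

Lemma size_alt k : size (alt k) = k.
Proof. by elim: k => //= k IH; rewrite size_rcons IH. Qed.

Lemma parent_rcons (w : seq nat) i : parent (rcons w i) = w.
Proof. by rewrite /parent size_rcons /= take_rcons_le // take_size. Qed.

Lemma indom_rcons S (t : tree S) w i : indom t (rcons w i) = indom t w && (i < arity t w).
Proof. by rewrite -cats1 indom_cat /= andbT. Qed.

Lemma indom_parent S (t : tree S) w : indom t w -> indom t (parent w).
Proof. by case/lastP: w => // w i; rewrite parent_rcons indom_rcons => /andP []. Qed.

Definition marked (w : seq nat) := last 1 w == 0.

Lemma marked_alt k : marked (alt k) = odd k.
Proof. by case: k => // k; rewrite /marked /= last_rcons; case: (odd k). Qed.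

Lemma arity_T n w : 2 <= arity (T n) w.
Proof. by rewrite /=; case: ifP. Qed.

Lemma indom_alt n k : indom (T n) (alt k).
Proof.
elim: k => // k IH /=; rewrite indom_rcons IH /=.
apply: leq_trans (arity_T n _); by case: (odd k).
Qed.

Lemma label_T n w : label (T n) w = mk (marked w).
Proof. by []. Qed.

Lemma noAUp n k : ~ @Acc _ B (T n) (if ~~ odd k then sM else sU) (alt k).
Proof.
move/acc_unfold => [_]; rewrite label_T marked_alt.
by case: (odd k); rewrite /= /dB /= mk_in.
Qed.

Lemma B_reject k : odd k -> ~ accepts B (T k.+1).
Proof.
move=> Hk [r [H1 H2]].
have H0 : @Acc _ B (T k.+1) uB (alt 0) by exists r; split; [exact: H1 | exact: H2].
have Hstep : forall i, @Acc _ B (T k.+1) uB (alt i) ->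
    psat (semP (T k.+1) (@Acc _ B (T k.+1)) (alt i)) coreB.
  move=> i /acc_unfold [_]; rewrite /= /dB /=.
  case: i => [|i] //=; rewrite (_ : (rcons _ _ == [::]) = false); last by case: (alt i).
  case=> // -[_ Hup]; exfalso; apply: (@noAUp k.+1 i).
  rewrite parent_rcons mk_in last_rcons in Hup; move: Hup.
  by case: (odd i).
have Hall : forall i, i <= k.+1 -> @Acc _ B (T k.+1) uB (alt i).
  elim=> // i IH Hi; have := Hstep i (IH (ltnW Hi)) => -[_ [E [HE HA]]].
  case: E HE HA => // _ HA.
  apply: (HA (odd i)) => //; apply: leq_trans (arity_T _ _); by case: (odd i).
have := Hstep k.+1 (Hall k.+1 (leqnn _)) => -[[E [HE HA]] _].
have Har : arity (T k.+1) (alt k.+1) = 3.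
  by rewrite /= size_rcons size_alt eqxx last_rcons Hk.
have [j [Hj HjE]] : exists j, j < 3 /\ j \notin E.
  case: (boolP (0 \in E)) => H0'; last by exists 0.
  case: (boolP (1 \in E)) => H1'; last by exists 1.
  case: (boolP (2 \in E)) => H2'; last by exists 2.
  exfalso; have : size [:: 0; 1; 2] <= size E.
    by apply: uniq_leq_size => // x; rewrite !inE => /or3P [] /eqP ->.
  by move=> /= /leq_ltn_trans /(_ HE).
have := HA j ltac:(by rewrite Har) HjE.
by move/acc_unfold => [_].
Qed.

Lemma B_accept k : ~~ odd k -> accepts B (T k.+1).
Proof.
move=> Hk.
pose P (q : QB) (w : seq nat) := indom (T k.+1) w /\
  match val q with
  | 3 => ((w == alt (size w)) && (arity (T k.+1) w <= 2)) ||
         ((w != [::]) && (marked w == marked (parent w)))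
  | 0 => marked w
  | 1 => ~~ marked w
  | _ => false
  end.
have : @Acc _ B (T k.+1) uB [::].
  apply: (@sat_acc _ B _ P); last by [].
  - move=> q w [Hi Hq]; split => //.
    case: q Hq => [[|[|[|[|m]]]] Hm] //= Hq; rewrite /dB /= mk_in.
    + by rewrite /marked in Hq; rewrite Hq.
    + by rewrite /marked in Hq; rewrite (negbTE Hq).
    + case/orP: Hq => [/andP [/eqP Ew Har] | /andP [Hne /eqP Hm']].
      * have [k' Ew'] : exists k', w = alt k' by exists (size w).
        subst w; rewrite size_alt in Har.
        have Har' : arity (T k.+1) (alt k') <= 2 by rewrite /= size_alt.
        have Hcore : psat (@semP _ B (T k.+1) P (alt k')) coreB.
          split.
          -- exists [:: 0; 1]; split => // j Hj; case: j Hj => [|[|j]] // Hj.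
             by move: (leq_trans Hj Har').
          -- exists [::]; split => // j Hj _; split.
             ++ by rewrite indom_rcons indom_alt Hj.
             ++ have Hj2 : j < 2 by exact: (leq_trans Hj Har').
                rewrite /= size_rcons size_alt.
                case: (eqVneq j (odd k')) => [Ej|Nj].
                ** rewrite Ej /= eqxx /= last_rcons.
                   case: ifP => // /andP [/eqP [Ek] H].
                   by rewrite Ek (negbTE Hk) in H.
                ** apply/orP; right; rewrite parent_rcons marked_alt /marked last_rcons.
                   have -> : (rcons (alt k') j == [::]) = false by case: (alt k').
                   by clear Hj; case: j Hj2 Nj => [|[|j]] //; case: (odd k').
        case: (alt k' == [::]) => //=; by right.
      * rewrite (negbTE Hne) /=; left; split.
        -- by case: (w) Hne.
        -- split; first exact: indom_parent.
           rewrite -Hm' /marked; by case: (last 1 w == 0).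
  - by move=> q w _; rewrite in_setT.
by case=> r [H1 H2]; exists r; split; [exact: H1 | exact: H2].
Qed.


Ltac inv_in := repeat match goal with
  | H : False |- _ => destruct H
  | H : _ \/ _ |- _ => destruct H as [H|H]; [subst|]
  | H : List.In _ _ |- _ => progress (simpl in H)
  end.

Lemma B_linear : twoway_linear B.
Proof.
exists (fun q : QB => val q), (fun q : QB => if val q == 3 then Universal else Transient); split.
- by move=> x y /val_inj.
- move=> [[|[|[|[|m]]]] Hm] a b x //=; rewrite /dB /=;
    try (case: (a0 \in a) => //=); move=> _; exact: (ltn_ord (atom_state x)).
- move=> [[|[|[|[|m]]]] Hm] //=.
  + by move=> a b x; rewrite /dB /=; case: (a0 \in a).
  + by move=> a b x; rewrite /dB /=; case: (a0 \in a).
  + split; first by rewrite in_setT.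
    move=> a b; rewrite /dB /=; case: b; case: (a0 \in a); split => /=.
    all: first [ by move=> c Hc x y Hx Hy Ex Ey; inv_in;
                 first [ reflexivity | by move: Ex => /(congr1 val) /= | by move: Ey => /(congr1 val) /= ]
               | by move=> x Hx; inv_in;
                 first [ by move=> /(congr1 val) /= | by move=> _; congr ABox; apply: val_inj ] ].
Qed.

End Trees.

Theorem corollary5p6 (AP : finType) (HAP : 0 < #|AP|) :
  (forall A : hta {set AP}, oneway_linear A ->
     exists B : hta {set AP}, twoway_linear B /\ recognises B (accepts A))
  /\
  (exists B : hta {set AP}, twoway_linear B /\
     forall A : hta {set AP}, oneway_linear A -> ~ recognises A (accepts B)).
Proof.
split.
- move=> A [HL Hnoup Hflag]; exists A; split; last by move=> t _.
  case: HL => rk [ty [Hinj Hmono Hty]]; exists rk, ty; split => // q.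
  by move: (Hty q); case: (ty q) => //; case.
- have [a0 _] := card_gt0P HAP.
  exists (B a0); split; first exact: B_linear.
  move=> A [HL Hnoup Hflag] Hrec.
  case: HL => rk [ty [Hinj Hmono _]].
  have [J HJ] := @stab_all AP a0 A Hnoup Hflag rk Hinj Hmono (hqI A).
  have Hodd : ~~ odd J.*2 by rewrite odd_double.
  have H1 : accepts A (T a0 J.*2.+1).
    by apply/(Hrec _ (@T_sigma AP a0 _)); exact: B_accept.
  have H2 : V a0 (hqI A) 1 J.*2.+1 by apply/(acc_root a0 Hnoup Hflag).
  have H3 : V a0 (hqI A) 1 J.*2.+2.
    apply/(HJ J.*2.+2 _ 1 erefl); first by rewrite -addnn; lia.
    by apply/(HJ J.*2.+1 _ 1 erefl) => //; rewrite -addnn; lia.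
  have H4 : accepts A (T a0 J.*2.+2) by apply/(acc_root a0 Hnoup Hflag).
  have H5 : accepts (B a0) (T a0 J.*2.+2) by apply/(Hrec _ (@T_sigma AP a0 _)).
  apply: (@B_reject AP a0 J.*2.+1) H5.
  by rewrite /= odd_double.
Qed.
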